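(* Let $\chi>0$, $n\in\mathbb N\cup\{0\}$, and for $t\ge r_0$ and $z\in\mathbb C$ set $$\mathscr A_n(t;z)=\Big(|z|^{p_c-n}-(|t|^{-\chi}+|z|^2)^{\frac{p_c-n}2}\Big)z^n,\quad \mathscr B_n(t;z)=(|t|^{-\chi}+|z|^2)^{\frac{p_c-n}2}z^n,\quad \widetilde{\mathscr B}_n(t;z)=(|t|^{-\chi}+|z|^2)^{\frac{p_c-n}2}|z|^n.$$ Then, uniformly in $t\ge r_0$ and $z,w\in\mathbb C$: (i) if $p_c\in(0,2)$, then $|\mathscr A_n(t;z)|\lesssim|t|^{-\frac{p_c}2\chi}$; (ii) if $p_c\in(0,1)$, then $|\widetilde{\mathscr B}_n(t;z)-\widetilde{\mathscr B}_n(t;w)|+|\mathscr B_n(t;z)-\mathscr B_n(t;w)|\lesssim|z-w|^{p_c}$ and $|\mathscr A_0(t;z)z|\le|t|^{-p_c\chi}|z|^{1-p_c}$.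
   Context: $d\in\{1,2,3\}$, $\lambda<1/2$ (with $\lambda>-1/3$ if $d=3$), $p_c=2/(d(1-\lambda))$, and $r_0\ge1$ is a fixed number. $A\lesssim B$ means $A\le CB$ with $C$ independent of $t,z,w$. *)

(* Defs.v *)
From HB Require Import structures.
From mathcomp Require Import all_boot all_order all_algebra.
From mathcomp Require Import all_classical all_reals all_analysis.
From mathcomp Require Import complex.
Set Implicit Arguments. Unset Strict Implicit. Unset Printing Implicit Defensive.
Import Order.TTheory GRing.Theory Num.Theory.
Local Open Scope ring_scope.

Definition cabs (R : realType) (z : R[i]) : R := Normc.normc z.

Definition pc (R : realType) (d : nat) (lam : R) : R := 2 / (d%:R * (1 - lam)).

(* A_n(t;z) = (|z|^{p-n} - (|t|^{-chi} + |z|^2)^{(p-n)/2}) z^n ;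
   real powers via powR (0 `^ a = 0 for a <> 0, continuous extension). *)
Definition scrA (R : realType) (p chi : R) (n : nat) (t : R) (z : R[i]) : R[i] :=
  (((cabs z) `^ (p - n%:R) - (`|t| `^ (- chi) + cabs z ^+ 2) `^ ((p - n%:R) / 2))%:C)%C
  * z ^+ n.

Definition scrB (R : realType) (p chi : R) (n : nat) (t : R) (z : R[i]) : R[i] :=
  (((`|t| `^ (- chi) + cabs z ^+ 2) `^ ((p - n%:R) / 2))%:C)%C * z ^+ n.

Definition scrBt (R : realType) (p chi : R) (n : nat) (t : R) (z : R[i]) : R :=
  (`|t| `^ (- chi) + cabs z ^+ 2) `^ ((p - n%:R) / 2) * cabs z ^+ n.

(* Main.v *)
Require Import Defs.
From HB Require Import structures.
From mathcomp Require Import all_boot all_order all_algebra.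
From mathcomp Require Import all_classical all_reals all_analysis.
From mathcomp Require Import complex.
From mathcomp Require Import lra ring.
Import Order.TTheory GRing.Theory Num.Theory.
Local Open Scope ring_scope.

Section Aux.
Variable R : realType.
Implicit Types (x y a b q : R) (z w : R[i]).

Lemma cabs_ge0 z : 0 <= cabs z.
Proof. by case: z => a b; rewrite /cabs /= sqrtr_ge0. Qed.

Lemma cabsM z w : cabs (z * w) = cabs z * cabs w.
Proof. exact: Normc.normcM. Qed.

Lemma cabsD z w : cabs (z + w) <= cabs z + cabs w.
Proof. exact: le_normcD. Qed.

Lemma cabsN z : cabs (- z) = cabs z.
Proof. exact: normcN. Qed.

Lemma cabsR x : cabs (x%:C)%C = `|x|.
Proof. by rewrite /cabs /= expr0n /= addr0 sqrtr_sqr. Qed.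

Lemma cabsV z : cabs z^-1 = (cabs z)^-1.
Proof. exact: Normc.normcV. Qed.

Lemma cabsX z n : cabs (z ^+ n) = cabs z ^+ n.
Proof.
elim: n => [|n IH]; first by rewrite !expr0 /cabs Normc.normc1.
by rewrite !exprS cabsM IH.
Qed.

Lemma cabsB z w : cabs (z - w) <= cabs z + cabs w.
Proof. by rewrite -(cabsN w) cabsD. Qed.

Lemma cabs_dist z w : `|cabs z - cabs w| <= cabs (z - w).
Proof.
rewrite ler_norml; apply/andP; split.
  rewrite lerNl opprB lerBlDr.
  by have := cabsD (w - z) z; rewrite subrK -(cabsN (w - z)) opprB.
by rewrite lerBlDr; have := cabsD (z - w) w; rewrite subrK.
Qed.


Lemma powR_mono q x y : 0 <= q -> 0 <= x -> x <= y -> x `^ q <= y `^ q.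
Proof.
move=> q0 x0 xy; apply: (ge0_ler_powR q0) => //; rewrite nnegrE //.
exact: le_trans xy.
Qed.

Lemma pow_le_lin x q : 0 <= x <= 1 -> 0 < q <= 1 -> x <= x `^ q.
Proof.
move=> /andP[x0 x1] /andP[q0 q1].
have [->|xn0] := eqVneq x 0; first by rewrite powR_ge0.
by apply: ger1_powR => //; rewrite x1 andbT lt_def xn0 x0.
Qed.

Lemma pow_subadd a b q : 0 <= a -> 0 <= b -> 0 < q <= 1 ->
  (a + b) `^ q <= a `^ q + b `^ q.
Proof.
move=> a0 b0 /andP[q0 q1].
have [s0|sn0] := eqVneq (a + b) 0.
  move: s0 => /eqP; rewrite paddr_eq0 // => /andP[/eqP -> /eqP ->].
  by rewrite addr0 powR0 ?gt_eqF // addr0.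
have sp : 0 < a + b by rewrite lt_def sn0 addr_ge0.
have Ea : a = (a + b) * (a / (a + b)) by rewrite mulrC divfK.
have Eb : b = (a + b) * (b / (a + b)) by rewrite mulrC divfK.
have ha : a / (a + b) <= (a / (a + b)) `^ q.
  apply: pow_le_lin; last by rewrite q0 q1.
  by rewrite divr_ge0 ?addr_ge0 //= ler_pdivrMr // mul1r lerDl.
have hb : b / (a + b) <= (b / (a + b)) `^ q.
  apply: pow_le_lin; last by rewrite q0 q1.
  by rewrite divr_ge0 ?addr_ge0 //= ler_pdivrMr // mul1r lerDr.
have -> : a `^ q = (a + b) `^ q * (a / (a + b)) `^ q.
  by rewrite -powRM ?divr_ge0 ?addr_ge0 // -Ea.
have -> : b `^ q = (a + b) `^ q * (b / (a + b)) `^ q.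
  by rewrite -powRM ?divr_ge0 ?addr_ge0 // -Eb.
rewrite -mulrDr.
rewrite -[X in X <= _]mulr1 ler_wpM2l ?powR_ge0 //.
apply: le_trans (lerD ha hb).
by rewrite -mulrDl divff.
Qed.

Lemma pow_holder a b q : 0 <= a -> 0 <= b -> 0 < q <= 1 ->
  `|a `^ q - b `^ q| <= `|a - b| `^ q.
Proof.
move=> a0 b0 hq; have q0 : 0 <= q by case/andP: hq => /ltW.
wlog ba : a b a0 b0 / b <= a.
  move=> H; have [ba|ab] := leP b a; first exact: H.
  by rewrite distrC (distrC a); apply: H => //; apply: ltW.
have hab : 0 <= a - b by rewrite subr_ge0.
rewrite ger0_norm ?subr_ge0 ?powR_mono // ger0_norm // lerBlDl.
by have := @pow_subadd (a - b) b q hab b0 hq; rewrite subrK addrC.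
Qed.


Lemma bern (th : R) n : 0 <= th <= 1 -> 1 - th ^+ n <= n%:R * (1 - th).
Proof.
move=> /andP[t0 t1]; elim: n => [|n IH]; first by rewrite expr0 subrr mul0r.
have h1 : th ^+ n <= 1 by rewrite exprn_ile1.
have h2 : 0 <= th ^+ n by rewrite exprn_ge0.
rewrite exprS -natr1 mulrDl mul1r.
have : th ^+ n * (1 - th) <= 1 - th.
  by rewrite -[X in _ <= X]mul1r ler_wpM2r // subr_ge0.
rewrite mulrBr mulr1; nra.
Qed.

Lemma keyX (eps X q : R) : 0 < eps -> eps <= X -> 0 < q <= 1 ->
  X `^ q * (eps / X) <= eps `^ q.
Proof.
move=> e0 eX hq; have X0 : 0 < X by apply: lt_le_trans eX.
have E : eps = X * (eps / X) by rewrite mulrC divfK // gt_eqF.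
have -> : eps `^ q = X `^ q * (eps / X) `^ q.
  by rewrite -powRM ?divr_ge0 ?ltW // -E.
rewrite ler_wpM2l ?powR_ge0 //.
apply: pow_le_lin => //.
by rewrite divr_ge0 ?(ltW e0) ?(ltW X0) //= ler_pdivrMr // mul1r.
Qed.

Lemma rho_pow (X b : R) : 0 <= X -> X `^ (b / 2) = (Num.sqrt X) `^ b.
Proof.
by move=> X0; rewrite -powR12_sqrt // -powRrM mulrC.
Qed.

Lemma rho_gt0 (eps r : R) : 0 < eps -> 0 < Num.sqrt (eps + r ^+ 2).
Proof. by move=> e0; rewrite sqrtr_gt0 ltr_wpDr // sqr_ge0. Qed.

Lemma rho_sq (eps r : R) : 0 < eps -> Num.sqrt (eps + r ^+ 2) ^+ 2 = eps + r ^+ 2.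
Proof. by move=> e0; rewrite sqr_sqrtr // addr_ge0 ?sqr_ge0 // ltW. Qed.

Lemma r_le_rho (eps r : R) : 0 < eps -> 0 <= r -> r <= Num.sqrt (eps + r ^+ 2).
Proof.
move=> e0 r0; rewrite -(@ler_pXn2r _ 2) // ?nnegrE ?sqrtr_ge0 //.
by rewrite sqr_sqrtr ?addr_ge0 ?sqr_ge0 ?(ltW e0) // lerDr ltW.
Qed.

Lemma rho_split (eps r p : R) n : 0 < eps ->
  (eps + r ^+ 2) `^ ((p - n%:R) / 2) * r ^+ n
  = Num.sqrt (eps + r ^+ 2) `^ p * (r / Num.sqrt (eps + r ^+ 2)) ^+ n.
Proof.
move=> e0; have rp := @rho_gt0 eps r e0.
rewrite rho_pow; last by rewrite addr_ge0 ?sqr_ge0 // ltW.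
rewrite powRB; last by rewrite (gt_eqF rp) implybT.
rewrite powR_mulrn ?(ltW rp) // expr_div_n mulrA.
by rewrite [_ / _ * _]mulrAC.
Qed.


Lemma absdiff_le (a b c N : R) : 0 <= N -> a <= 1 -> b <= 1 -> c <= 1 ->
  1 - a <= 1 - c -> 1 - b <= N * (1 - c) -> `|a - b| <= (1 + N) * (1 - c).
Proof.
move=> N0 a1 b1 c1 h1 h2.
have : 0 <= N * (1 - c) by rewrite mulr_ge0 // subr_ge0.
rewrite mulrDl mul1r ler_norml; move=> h3; apply/andP; split; lra.
Qed.

Lemma partA (eps r p : R) n : 0 < eps -> 0 <= r -> 0 < p <= 2 ->
  `| r `^ (p - n%:R) - (eps + r ^+ 2) `^ ((p - n%:R) / 2) | * r ^+ n
  <= (1 + n%:R) * eps `^ (p / 2).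
Proof.
move=> e0 r0 /andP[p0 p2].
have [->|rn0] := eqVneq r 0.
  case: n => [|n].
    rewrite subr0 expr0 mulr1 powR0 ?gt_eqF // expr0n addr0 sub0r normrN.
    by rewrite ger0_norm ?powR_ge0 // addr0 mul1r.
  by rewrite [0 ^+ n.+1]exprS mul0r mulr0 mulr_ge0 ?powR_ge0 // addr_ge0 // ler0n.
have rp : 0 < r by rewrite lt_def rn0.
rewrite -[r ^+ n]ger0_norm ?exprn_ge0 // -normrM mulrBl.
rewrite rho_split //.
rewrite powRB; last by rewrite (gt_eqF rp) implybT.
rewrite powR_mulrn ?(ltW rp) // divfK ?expf_neq0 //.
have rhop : 0 < Num.sqrt (eps + r ^+ 2) := @rho_gt0 eps r e0.
have rle : r <= Num.sqrt (eps + r ^+ 2) := @r_le_rho eps r e0 r0.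
have X0 : 0 < eps + r ^+ 2 by rewrite ltr_wpDr // sqr_ge0.
have Eth2 : 1 - (r / Num.sqrt (eps + r ^+ 2)) ^+ 2 = eps / (eps + r ^+ 2).
  rewrite expr_div_n sqr_sqrtr ?(ltW X0) //.
  rewrite -[1](@divff _ (eps + r ^+ 2)) ?gt_eqF // -mulrBl.
  by rewrite addrK.
have Er : r = Num.sqrt (eps + r ^+ 2) * (r / Num.sqrt (eps + r ^+ 2)).
  by rewrite mulrC divfK // gt_eqF.
rewrite {1}Er powRM ?(ltW rhop) ?divr_ge0 ?(ltW rhop) //.
rewrite -(@rho_pow (eps + r ^+ 2) p (ltW X0)).
rewrite -mulrBr normrM (ger0_norm (powR_ge0 _ _)).
move: Eth2 rhop rle Er.
set rho := Num.sqrt (eps + r ^+ 2) => Eth2 rhop rle Er.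
set th := r / rho.
have th0 : 0 < th by rewrite divr_gt0.
have th1 : th <= 1 by rewrite ler_pdivrMr // mul1r.
have hp1 : th `^ p <= 1.
  by rewrite -(powRr0 th); apply: ger_powR; rewrite ?th0 ?th1 // ltW.
have hp2 : th ^+ 2 <= th `^ p.
  by rewrite -powR_mulrn ?(ltW th0) //; apply: ger_powR; rewrite ?th0 ?th1.
have hn1 : th ^+ n <= 1 by rewrite exprn_ile1 // ltW.
have hc1 : th ^+ 2 <= 1 by rewrite exprn_ile1 // ltW.
have hsq : th ^+ 2 <= th by rewrite expr2 ler_piMl // ltW.
have hb : 1 - th ^+ n <= n%:R * (1 - th ^+ 2).
  apply: le_trans (@bern th n _) _; first by rewrite th1 ltW.
  by rewrite ler_wpM2l ?ler0n // lerB.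
have hd := @absdiff_le (th `^ p) (th ^+ n) (th ^+ 2) n%:R (ler0n _ n) hp1 hn1 hc1.
have hd' := hd (lerB (lexx 1) hp2) hb.
apply: le_trans (ler_wpM2l (powR_ge0 _ _) hd') _.
rewrite Eth2 mulrCA ler_wpM2l ?addr_ge0 ?ler0n //.
apply: keyX => //; first by rewrite lerDl sqr_ge0.
by rewrite divr_gt0 //= ler_pdivrMr // mul1r.
Qed.


Lemma keyA0 (rho th p : R) : 0 < rho -> 0 < th <= 1 -> 0 < p <= 1 ->
  `|rho `^ p * th `^ p - rho `^ p| * (rho `^ p * th `^ p)
  <= (rho * rho * (1 - th ^+ 2)) `^ p.
Proof.
move=> rhop /andP[th0 th1] /andP[p0 p1].
have hp1 : th `^ p <= 1.
  by rewrite -(powRr0 th); apply: ger_powR; rewrite ?th0 ?th1 // ltW.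
have hp2 : th <= th `^ p by apply: ger1_powR; rewrite ?th0.
have hsq : th ^+ 2 <= th by rewrite expr2 ler_piMl // ltW.
have hc1 : th ^+ 2 <= 1 by rewrite exprn_ile1 // ltW.
have hq : 1 - th ^+ 2 <= (1 - th ^+ 2) `^ p.
  by apply: pow_le_lin; rewrite ?p0 ?p1 // subr_ge0 hc1 /= lerBlDr lerDl sqr_ge0.
have Ea : rho `^ p * th `^ p - rho `^ p = - (rho `^ p * (1 - th `^ p)).
  by rewrite mulrBr mulr1 opprB.
have rp0 := powR_ge0 rho p.
have tp0 := powR_ge0 th p.
rewrite Ea normrN ger0_norm ?mulr_ge0 ?subr_ge0 //.
rewrite !powRM ?mulr_ge0 ?(ltW rhop) ?subr_ge0 //.
rewrite mulrACA ler_wpM2l ?mulr_ge0 //.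
apply: le_trans hq.
have : (1 - th `^ p) * th `^ p <= 1 - th `^ p.
  by rewrite -[X in _ <= X]mulr1 ler_wpM2l ?subr_ge0.
lra.
Qed.

Lemma partA0 (eps r p : R) : 0 < eps -> 0 <= r -> 0 < p <= 1 ->
  `| r `^ p - (eps + r ^+ 2) `^ (p / 2) | * r <= eps `^ p * r `^ (1 - p).
Proof.
move=> e0 r0 /andP[p0 p1].
have [->|rn0] := eqVneq r 0; first by rewrite mulr0 mulr_ge0 ?powR_ge0.
have rp : 0 < r by rewrite lt_def rn0.
have rhop : 0 < Num.sqrt (eps + r ^+ 2) := @rho_gt0 eps r e0.
have rle : r <= Num.sqrt (eps + r ^+ 2) := @r_le_rho eps r e0 r0.
have X0 : 0 < eps + r ^+ 2 by rewrite ltr_wpDr // sqr_ge0.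
have Eth2 : 1 - (r / Num.sqrt (eps + r ^+ 2)) ^+ 2 = eps / (eps + r ^+ 2).
  rewrite expr_div_n sqr_sqrtr ?(ltW X0) //.
  rewrite -[1](@divff _ (eps + r ^+ 2)) ?gt_eqF // -mulrBl.
  by rewrite addrK.
have EX : Num.sqrt (eps + r ^+ 2) * Num.sqrt (eps + r ^+ 2) = eps + r ^+ 2.
  by rewrite -expr2 sqr_sqrtr ?(ltW X0).
have Er : r = Num.sqrt (eps + r ^+ 2) * (r / Num.sqrt (eps + r ^+ 2)).
  by rewrite mulrC divfK // gt_eqF.
have rpp : 0 < r `^ p by apply: powR_gt0.
have Er1 : r `^ (1 - p) = r / r `^ p.
  by rewrite powRB ?powRr1 ?(ltW rp) // rn0 implybT.
rewrite Er1 mulrA ler_pdivlMr // mulrAC ler_wpM2r ?(ltW rp) //.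
rewrite (@rho_pow (eps + r ^+ 2) p (ltW X0)).
have -> : eps `^ p = (Num.sqrt (eps + r ^+ 2) * Num.sqrt (eps + r ^+ 2)
             * (1 - (r / Num.sqrt (eps + r ^+ 2)) ^+ 2)) `^ p.
  by rewrite EX Eth2 mulrC divfK ?gt_eqF.
have -> : r `^ p = Num.sqrt (eps + r ^+ 2) `^ p * (r / Num.sqrt (eps + r ^+ 2)) `^ p.
  by rewrite -powRM ?(ltW rhop) ?divr_ge0 ?(ltW rhop) ?(ltW rp) // -Er.
apply: keyA0 => //; last by rewrite p0 p1.
by rewrite divr_gt0 //= ler_pdivrMr // mul1r.
Qed.


Lemma rho_lip (eps r s : R) : 0 < eps -> 0 <= r -> 0 <= s ->
  `|Num.sqrt (eps + r ^+ 2) - Num.sqrt (eps + s ^+ 2)| <= `|r - s|.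
Proof.
move=> e0 r0 s0.
have hr := @rho_gt0 eps r e0; have hs := @rho_gt0 eps s e0.
have lr := @r_le_rho eps r e0 r0; have ls := @r_le_rho eps s e0 s0.
have E : (Num.sqrt (eps + r ^+ 2) - Num.sqrt (eps + s ^+ 2))
         * (Num.sqrt (eps + r ^+ 2) + Num.sqrt (eps + s ^+ 2))
         = (r - s) * (r + s).
  rewrite -!subr_sqr !sqr_sqrtr ?addr_ge0 ?sqr_ge0 ?(ltW e0) //.
  by rewrite opprD addrACA subrr add0r.
have pos : 0 < Num.sqrt (eps + r ^+ 2) + Num.sqrt (eps + s ^+ 2) by rewrite addr_gt0.
rewrite -(ler_pM2r pos).
have := congr1 Num.norm E.
rewrite !normrM (ger0_norm (ltW pos)) (ger0_norm (addr_ge0 r0 s0)) => ->.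
rewrite ler_wpM2l ?normr_ge0 //.
exact: lerD.
Qed.

Lemma powdiff (u v : R[i]) n : cabs u <= 1 -> cabs v <= 1 ->
  cabs (u ^+ n - v ^+ n) <= n%:R * cabs (u - v).
Proof.
move=> u1 v1; elim: n => [|n IH]; first by rewrite !expr0 subrr mul0r /cabs Normc.normc0.
have -> : u ^+ n.+1 - v ^+ n.+1 = u * (u ^+ n - v ^+ n) + (u - v) * v ^+ n.
  by rewrite !exprS mulrBr mulrBl addrA subrK.
apply: le_trans (cabsD _ _) _.
rewrite !cabsM cabsX -natr1 mulrDl mul1r.
apply: lerD.
  apply: le_trans (_ : 1 * cabs (u ^+ n - v ^+ n) <= _).
    by rewrite ler_wpM2r ?cabs_ge0.
  by rewrite mul1r.
rewrite -[X in _ <= X]mulr1 ler_wpM2l ?cabs_ge0 //.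
by rewrite exprn_ile1 ?cabs_ge0.
Qed.


Definition rhoc (eps : R) (z : R[i]) := Num.sqrt (eps + cabs z ^+ 2).

Lemma realC_neq0 (x : R) : x != 0 -> (x%:C)%C != 0 :> R[i].
Proof.
move=> xn0; apply/eqP => h; move: (congr1 (fun c : R[i] => let: (a +i* _)%C := c in a) h) => /= hx.
by move: xn0; rewrite hx eqxx.
Qed.

Lemma cabs_unit (eps : R) (z : R[i]) : 0 < eps -> cabs (z / ((rhoc eps z)%:C)%C) <= 1.
Proof.
move=> e0; have hz := @rho_gt0 eps (cabs z) e0.
rewrite cabsM cabsV cabsR ger0_norm ?(ltW hz) // ler_pdivrMr // mul1r.
exact: r_le_rho (cabs_ge0 z).
Qed.

Lemma holderB (eps p : R) n (z w : R[i]) : 0 < eps -> 0 < p <= 1 ->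
  cabs ((((rhoc eps z) `^ p)%:C)%C * (z / ((rhoc eps z)%:C)%C) ^+ n
      - (((rhoc eps w) `^ p)%:C)%C * (w / ((rhoc eps w)%:C)%C) ^+ n)
  <= (1 + 2 * n%:R) * cabs (z - w) `^ p.
Proof.
move=> e0 /andP[p0 p1].
have cu := @cabs_unit eps z e0; have cv := @cabs_unit eps w e0.
have hz : 0 < rhoc eps z := @rho_gt0 eps (cabs z) e0.
have hw : 0 < rhoc eps w := @rho_gt0 eps (cabs w) e0.
have lz : cabs z <= rhoc eps z := @r_le_rho eps (cabs z) e0 (cabs_ge0 z).
have lw : cabs w <= rhoc eps w := @r_le_rho eps (cabs w) e0 (cabs_ge0 w).
have hlip : `|rhoc eps z - rhoc eps w| <= cabs (z - w).
  exact: le_trans (@rho_lip eps (cabs z) (cabs w) e0 (cabs_ge0 z) (cabs_ge0 w)) (cabs_dist z w).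
move: cu cv hz hw lz lw hlip.
set rz := rhoc eps z; set rw := rhoc eps w.
set u := z / (rz%:C)%C; set v := w / (rw%:C)%C; set dd := cabs (z - w).
move=> cu cv hz hw lz lw hlip.
have dd0 : 0 <= dd by exact: cabs_ge0.
have b0 : 0 <= rw `^ p by exact: powR_ge0.
have E : ((rz `^ p)%:C)%C * u ^+ n - ((rw `^ p)%:C)%C * v ^+ n
   = ((rz `^ p - rw `^ p)%:C)%C * u ^+ n + ((rw `^ p)%:C)%C * (u ^+ n - v ^+ n).
  by rewrite rmorphB /=; ring.
rewrite E; apply: le_trans (cabsD _ _) _.
rewrite !cabsM !cabsR cabsX (ger0_norm b0).
have hab : `|rz `^ p - rw `^ p| <= dd `^ p.
  apply: le_trans (@pow_holder rz rw p (ltW hz) (ltW hw) _) _; first by rewrite p0 p1.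
  exact: powR_mono (ltW p0) (normr_ge0 _) hlip.
have c2 : cabs (u - v) <= 2.
  apply: le_trans (cabsB u v) _.
  by apply: le_trans (lerD cu cv) _; rewrite -natr1.
have cd : cabs (u - v) <= 2 * dd / rw.
  have nz := @realC_neq0 rz (lt0r_neq0 hz); have nw := @realC_neq0 rw (lt0r_neq0 hw).
  have Euv : u - v = (z * (rw%:C)%C - w * (rz%:C)%C) / ((rz * rw)%:C)%C.
    by rewrite rmorphM /= /u /v; field; rewrite nz nw.
  have Ez : z * (rw%:C)%C - w * (rz%:C)%C
            = z * ((rw - rz)%:C)%C + (z - w) * (rz%:C)%C.
    by rewrite rmorphB /=; ring.
  rewrite Euv cabsM cabsV cabsR ger0_norm ?mulr_ge0 ?(ltW hz) ?(ltW hw) //.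
  rewrite ler_pdivrMr ?mulr_gt0 //.
  have -> : 2 * dd / rw * (rz * rw) = (dd * rz + dd * rz).
    by field; rewrite gt_eqF.
  rewrite Ez; apply: le_trans (cabsD _ _) _.
  rewrite !cabsM !cabsR (ger0_norm (ltW hz)).
  apply: lerD; last by rewrite mulrC.
  rewrite mulrC; apply: ler_pM => //; first exact: cabs_ge0.
  by rewrite distrC.
have hc : rw `^ p * cabs (u - v) <= 2 * dd `^ p.
  have [le|lt] := leP rw dd.
    rewrite mulrC; apply: ler_pM => //; first exact: cabs_ge0.
    exact: powR_mono (ltW p0) (ltW hw) le.
  apply: le_trans (ler_wpM2l b0 cd) _.
  have -> : rw `^ p * (2 * dd / rw) = 2 * (rw `^ p * (dd / rw)) by ring.
  rewrite ler_wpM2l //.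
  have -> : dd `^ p = rw `^ p * (dd / rw) `^ p.
    by rewrite -powRM ?(ltW hw) ?divr_ge0 ?(ltW hw) // mulrC divfK ?gt_eqF.
  rewrite ler_wpM2l // pow_le_lin ?p0 ?p1 //.
  by rewrite divr_ge0 ?(ltW hw) //= ler_pdivrMr // mul1r ltW.
have hun : cabs u ^+ n <= 1 by rewrite exprn_ile1 ?cabs_ge0.
rewrite mulrDl mul1r; apply: lerD.
  rewrite -[X in _ <= X]mulr1; apply: ler_pM => //; rewrite ?normr_ge0 ?exprn_ge0 ?cabs_ge0 //.
apply: le_trans (ler_wpM2l b0 (@powdiff u v n cu cv)) _.
have -> : rw `^ p * (n%:R * cabs (u - v)) = n%:R * (rw `^ p * cabs (u - v)) by ring.
have -> : 2 * n%:R * dd `^ p = n%:R * (2 * dd `^ p) by ring.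
by rewrite ler_wpM2l ?ler0n.
Qed.

End Aux.
Arguments rhoc {R}.

Lemma scrB_eq (R : realType) (p chi t : R) n (z : R[i]) : 0 < `|t| `^ (- chi) ->
  scrB p chi n t z =
  ((((rhoc (`|t| `^ (- chi)) z) `^ p)%:C)%C * (z / ((rhoc (`|t| `^ (- chi)) z)%:C)%C) ^+ n).
Proof.
move=> e0; rewrite /scrB /rhoc.
have hr := @rho_gt0 R (`|t| `^ (- chi)) (cabs z) e0.
rewrite rho_pow; last by rewrite addr_ge0 ?sqr_ge0 // ltW.
rewrite powRB; last by rewrite (gt_eqF hr) implybT.
rewrite powR_mulrn ?(ltW hr) // fmorph_div rmorphXn expr_div_n /=.
by rewrite mulrAC -mulrA.
Qed.

Lemma scrBt_eq (R : realType) (p chi t : R) n (z : R[i]) : 0 < `|t| `^ (- chi) ->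
  ((scrBt p chi n t z)%:C)%C =
  ((((rhoc (`|t| `^ (- chi)) ((cabs z)%:C)%C) `^ p)%:C)%C * (((cabs z)%:C)%C / ((rhoc (`|t| `^ (- chi)) ((cabs z)%:C)%C)%:C)%C) ^+ n).
Proof.
move=> e0; rewrite /scrBt (@rho_split R _ (cabs z) p n e0).
have -> : rhoc (`|t| `^ (- chi)) ((cabs z)%:C)%C = Num.sqrt (`|t| `^ (- chi) + cabs z ^+ 2).
  by rewrite /rhoc cabsR (ger0_norm (@cabs_ge0 R z)).
by rewrite rmorphM rmorphXn fmorph_div.
Qed.

Theorem lemma4p4 (R : realType) (d : nat) (lam r0 chi : R) (n : nat) :
  (1 <= d <= 3)%N -> lam < 1 / 2 -> (d = 3%N -> - (1 / 3) < lam) ->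
  1 <= r0 -> 0 < chi ->
  let p := pc d lam in
  ((0 < p < 2) ->
     exists C : R, forall (t : R) (z : R[i]), r0 <= t ->
       cabs (scrA p chi n t z) <= C * `|t| `^ (- (p / 2 * chi)))
  /\
  ((0 < p < 1) ->
     (exists C : R, forall (t : R) (z w : R[i]), r0 <= t ->
        `|scrBt p chi n t z - scrBt p chi n t w|
        + cabs (scrB p chi n t z - scrB p chi n t w)
        <= C * cabs (z - w) `^ p)
     /\
     (forall (t : R) (z : R[i]), r0 <= t ->
        cabs (scrA p chi 0 t z * z) <= `|t| `^ (- (p * chi)) * cabs z `^ (1 - p))).
Proof.
move=> _ _ _ hr0 hchi p.
have tpos : forall t, r0 <= t -> 0 < t.
  by move=> t ht; apply: lt_le_trans ltr01 (le_trans hr0 ht).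
have epos : forall t, r0 <= t -> 0 < `|t| `^ (- chi).
  by move=> t ht; apply: powR_gt0; rewrite normr_gt0 gt_eqF // tpos.
split.
  move=> /andP[p0 p2]; exists (1 + n%:R) => t z ht.
  rewrite /scrA cabsM cabsR cabsX.
  have -> : `|t| `^ (- (p / 2 * chi)) = (`|t| `^ (- chi)) `^ (p / 2).
    by rewrite -powRrM mulNr [chi * _]mulrC.
  apply: (@partA R (`|t| `^ (- chi)) (cabs z) p n (epos t ht) (@cabs_ge0 R z)).
  by rewrite p0 ltW.
move=> /andP[p0 p1]; have hp : 0 < p <= 1 by rewrite p0 ltW.
split.
  exists (2 * (1 + 2 * n%:R)) => t z w ht.
  have e0 := epos t ht.
  have h1 : `|scrBt p chi n t z - scrBt p chi n t w| <= (1 + 2 * n%:R) * cabs (z - w) `^ p.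
    rewrite -cabsR.
    have -> : (((scrBt p chi n t z - scrBt p chi n t w)%:C)%C : R[i]) = ((scrBt p chi n t z)%:C)%C - ((scrBt p chi n t w)%:C)%C by rewrite rmorphB.
    rewrite !scrBt_eq //.
    apply: le_trans (@holderB R _ _ n _ _ e0 hp) _.
    rewrite ler_wpM2l ?addr_ge0 ?mulr_ge0 ?ler0n //.
    apply: powR_mono (ltW p0) (@cabs_ge0 R _) _.
    by rewrite -rmorphB cabsR cabs_dist.
  have h2 : cabs (scrB p chi n t z - scrB p chi n t w) <= (1 + 2 * n%:R) * cabs (z - w) `^ p.
    by rewrite !scrB_eq //; apply: holderB.
  have -> : 2 * (1 + 2 * n%:R) * cabs (z - w) `^ p
     = (1 + 2 * n%:R) * cabs (z - w) `^ p + (1 + 2 * n%:R) * cabs (z - w) `^ p by ring.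
  exact: lerD h1 h2.
move=> t z ht.
rewrite /scrA !cabsM cabsR cabsX expr0 mulr1 mulr0n subr0.
have -> : `|t| `^ (- (p * chi)) = (`|t| `^ (- chi)) `^ p.
  by rewrite -powRrM mulNr [chi * _]mulrC.
exact: (@partA0 R (`|t| `^ (- chi)) (cabs z) p (epos t ht) (@cabs_ge0 R z) hp).
Qed.
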